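(* Let $g\geqslant0$. With respect to the lexicographic monomial order with $\alpha>\gamma$, the set \[\{\zeta'_g,\ \gamma\zeta'_{g-2},\ \gamma^2\zeta'_{g-4},\ \ldots,\ \gamma^{\lfloor g/2\rfloor}\zeta'_{g-2\lfloor g/2\rfloor},\ \gamma^{\lceil g/2\rceil}\}\] is a Gröbner basis for $J'_g$. Consequently, a vector space basis of $\mathbb{C}[\alpha,\gamma]/J'_g$ is represented by the monomials $\alpha^a\gamma^c$ with $0\leqslant c<g/2$ and $0\leqslant a<g-2c$ when $g$ is even, and by the monomials $\alpha^a\gamma^c$ with $0\leqslant c\leqslant(g-1)/2$ and $0\leqslant a<g-2c$ when $g$ is odd.
   Context: Define $\zeta'_k\in\mathbb{C}[\alpha,\gamma]$ by $\zeta'_k=0$ for $k<0$, $\zeta'_0=1$, and $\zeta'_{k+1}=\alpha\zeta'_k+2k(k-1)\gamma\zeta'_{k-2}$ for $k\geqslant0$; let $J'_k=(\zeta'_k,\zeta'_{k+1},\zeta'_{k+2})$. *)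

(* Defs.v *)
From HB Require Import structures.
From mathcomp Require Import all_boot all_order all_algebra.
From mathcomp Require Import reals complex.
From mathcomp Require Import mpoly.
Unset Printing Implicit Defensive.
Import Order.TTheory GRing.Theory Num.Theory.
Local Open Scope ring_scope.

Definition CC (R : realType) : fieldType := complex R.

Definition PP (R : realType) := {mpoly (CC R)[2]}.
Definition ia : 'I_2 := ord0.
Definition ig : 'I_2 := ord_max.
Definition alpha (R : realType) : PP R := 'X_ia.
Definition gamma (R : realType) : PP R := 'X_ig.

(* zeta_triple k = (zeta'_k, zeta'_{k-1}, zeta'_{k-2}), with zeta'_j = 0 for j < 0 *)
Fixpoint zeta_triple (R : realType) (k : nat) : PP R * PP R * PP R :=
  match k with
  | 0 => (1, 0, 0)
  | k'.+1 =>
      let: (a, b, c) := zeta_triple R k' in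
      (alpha R * a + (2 * k' * (k'.-1))%N%:R * gamma R * c, a, b)
  end.

Definition zeta' (R : realType) (k : nat) : PP R := (zeta_triple R k).1.1.

Definition in_ideal {R : realType} (gens : seq (PP R)) (p : PP R) : Prop :=
  exists c : 'I_(size gens) -> PP R, p = \sum_(i < size gens) c i * gens`_i.

Definition J' (R : realType) (k : nat) : PP R -> Prop :=
  in_ideal [:: zeta' R k; zeta' R k.+1; zeta' R k.+2].

Definition lexle (m1 m2 : 'X_{1..2}) : bool :=
  (m1 ia < m2 ia)%N || ((m1 ia == m2 ia) && (m1 ig <= m2 ig)%N).

Definition is_lexLM {R : realType} (p : PP R) (m : 'X_{1..2}) : Prop :=
  m \in msupp p /\ forall m', m' \in msupp p -> lexle m' m.

Definition is_groebner_lex {R : realType} (G : seq (PP R)) (I : PP R -> Prop) : Prop :=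
  (forall g, g \in G -> I g) /\
  (forall f, I f -> f != 0 ->
     exists g, [/\ g \in G & exists mf mg,
        [/\ is_lexLM f mf, is_lexLM g mg & (mg <= mf)%MM]]).

Definition groebner_set (R : realType) (g : nat) : seq (PP R) :=
  [seq gamma R ^+ j * zeta' R (g - 2 * j) | j <- iota 0 (g./2).+1]
  ++ [:: gamma R ^+ (uphalf g)].

Definition mono (R : realType) (a c : nat) : PP R := alpha R ^+ a * gamma R ^+ c.

Definition basis_exp (g a c : nat) : bool :=
  if odd g then (c <= (g.-1)./2)%N && (a < g - 2 * c)%N
  else (2 * c < g)%N && (a < g - 2 * c)%N.

Definition quotient_basis {R : realType} (I : PP R -> Prop) (N : nat)
    (P : nat -> nat -> bool) : Prop :=
  (forall p : PP R, exists coef : 'I_N.+1 * 'I_N.+1 -> CC R,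
      I (p - \sum_(ac : 'I_N.+1 * 'I_N.+1 | P ac.1 ac.2) coef ac *: mono R ac.1 ac.2)) /\
  (forall coef : 'I_N.+1 * 'I_N.+1 -> CC R,
      I (\sum_(ac : 'I_N.+1 * 'I_N.+1 | P ac.1 ac.2) coef ac *: mono R ac.1 ac.2) ->
      forall ac : 'I_N.+1 * 'I_N.+1, P ac.1 ac.2 -> coef ac = 0).

(* Main.v *)
Require Import Defs.
From HB Require Import structures.
From mathcomp Require Import all_boot all_order all_algebra.
From mathcomp Require Import reals complex.
From mathcomp Require Import mpoly.
From mathcomp Require Import ring zify.
Import Order.TTheory GRing.Theory Num.Theory.
Local Open Scope ring_scope.

Section S.
Variable R : realType.
Local Notation P := (PP R).
Local Notation z := (zeta' R).

Lemma J'E g (p : P) :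
  J' R g p <-> exists x y w, p = x * z g + y * z g.+1 + w * z g.+2.
Proof.
split.
- case=> c ->; exists (c ord0), (c (lift ord0 ord0)), (c (lift ord0 (lift ord0 ord0))).
  by rewrite /= !big_ord_recl big_ord0 addr0 addrA.
- case=> x [y [w ->]]; exists (fun i : 'I_3 => [:: x; y; w]`_i).
  by rewrite /= !big_ord_recl big_ord0 addr0 addrA.
Qed.

Lemma zetaS k : z k.+3 = alpha R * z k.+2 + (2 * k.+2 * k.+1)%N%:R * gamma R * z k.
Proof. by rewrite /zeta' /=; case: (zeta_triple R k) => [[a b] c]. Qed.

Lemma zeta0 : z 0 = 1. Proof. by []. Qed.
Lemma zeta1 : z 1 = alpha R. Proof. rewrite /zeta' /=; ring. Qed.
Lemma zeta2 : z 2 = alpha R ^+ 2. Proof. rewrite /zeta' /=; ring. Qed.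

Lemma J_add g p q : J' R g p -> J' R g q -> J' R g (p + q).
Proof.
move=> /J'E [x [y [w ->]]] /J'E [x' [y' [w' ->]]]; apply/J'E.
exists (x + x'), (y + y'), (w + w'); ring.
Qed.

Lemma J_mul g q p : J' R g p -> J' R g (q * p).
Proof.
move=> /J'E [x [y [w ->]]]; apply/J'E.
exists (q * x), (q * y), (q * w); ring.
Qed.

Lemma J_0 g : J' R g 0.
Proof. by apply/J'E; exists 0, 0, 0; ring. Qed.

Lemma J_opp g p : J' R g p -> J' R g (- p).
Proof. by move=> h; rewrite -mulN1r; apply: J_mul. Qed.

Lemma J_g0 g : J' R g (z g). Proof. by apply/J'E; exists 1, 0, 0; ring. Qed.
Lemma J_g1 g : J' R g (z g.+1). Proof. by apply/J'E; exists 0, 1, 0; ring. Qed.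
Lemma J_g2 g : J' R g (z g.+2). Proof. by apply/J'E; exists 0, 0, 1; ring. Qed.

Lemma J_sum g (I : Type) (r : seq I) (F : I -> P) :
  (forall i, J' R g (F i)) -> J' R g (\sum_(i <- r) F i).
Proof.
move=> h; elim: r => [|i r ih]; first by rewrite big_nil; apply: J_0.
by rewrite big_cons; apply: J_add.
Qed.

Lemma gz n : exists c : P, gamma R * z n = c * (z n.+3 - alpha R * z n.+2).
Proof.
set k := (2 * n.+2 * n.+1)%N.
have hk : (k%:R : CC R) != 0 by rewrite pnatr_eq0 /k; lia.
exists ((k%:R : CC R)^-1)%:MP.
rewrite zetaS addrAC subrr add0r -mpolyC_nat mulrA mulrA -mpolyCM mulVf //.
by rewrite mpolyC1 mul1r.
Qed.



Lemma I2 (i : 'I_2) : i = ia \/ i = ig.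
Proof. by case: i => [[|[|]]] //= hi; [left|right]; apply: val_inj. Qed.

Lemma Uaa : U_(ia)%MM ia = 1%N. Proof. by rewrite mnm1E. Qed.
Lemma Uag : U_(ia)%MM ig = 0%N. Proof. by rewrite mnm1E. Qed.
Lemma Uga : U_(ig)%MM ia = 0%N. Proof. by rewrite mnm1E. Qed.
Lemma Ugg : U_(ig)%MM ig = 1%N. Proof. by rewrite mnm1E. Qed.

Definition mnmS := (@mnmDE 2, @mnmBE 2, @mulmnE 2, Uaa, Uag, Uga, Ugg, @mnm0E 2).

Lemma mnm2P (m1 m2 : 'X_{1..2}) : m1 ia = m2 ia -> m1 ig = m2 ig -> m1 = m2.
Proof. by move=> h1 h2; apply/mnmP => i; case: (I2 i) => ->. Qed.

Ltac mnm_tac := apply: mnm2P; rewrite !mnmS; lia.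

Definition wd (m : 'X_{1..2}) := (m ia + 3 * m ig)%N.
Lemma wdD m1 m2 : wd (m1 + m2) = (wd m1 + wd m2)%N.
Proof. rewrite /wd !mnmDE; lia. Qed.

Definition hmg d (p : P) := {in msupp p, forall m, wd m = d}.

Lemma hmgM d1 d2 d p q : d = (d1 + d2)%N -> hmg d1 p -> hmg d2 q -> hmg d (p * q).
Proof.
move=> -> hp hq m /msuppM_le /allpairsP [[m1 m2] /= [h1 h2 ->]].
by rewrite wdD hp // hq.
Qed.
Arguments hmgM {d1 d2 d p q}.

Lemma hmgD d p q : hmg d p -> hmg d q -> hmg d (p + q).
Proof. by move=> hp hq m /msuppD_le; rewrite mem_cat => /orP [/hp|/hq]. Qed.

Lemma hmgX m : hmg (wd m) 'X_[m].
Proof. by move=> m'; rewrite msuppX mem_seq1 => /eqP ->. Qed.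

Lemma hmg_nat k : hmg 0 (k%:R : P).
Proof.
rewrite -mpolyC_nat => m; rewrite msuppC; case: eqP => //= _.
by rewrite mem_seq1 => /eqP ->; rewrite /wd !mnm0E.
Qed.

Lemma hmg_alpha : hmg 1 (alpha R).
Proof. by have := hmgX U_(ia); rewrite /wd !mnmS. Qed.
Lemma hmg_gamma : hmg 3 (gamma R).
Proof. by have := hmgX U_(ig); rewrite /wd !mnmS. Qed.

Lemma zeta_hmg3 k : [/\ hmg k (z k), hmg k.+1 (z k.+1) & hmg k.+2 (z k.+2)].
Proof.
elim: k => [|k [h0 h1 h2]].
  split; first by rewrite zeta0; exact: (hmg_nat 1).
    by rewrite zeta1; apply: hmg_alpha.
  by rewrite zeta2 expr2; apply: (hmgM _ hmg_alpha hmg_alpha).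
split=> //; rewrite zetaS; apply: hmgD.
  by apply: (hmgM _ hmg_alpha h2).
apply: (hmgM (d1:=3) erefl _ h0).
exact: (hmgM (d1:=0) (d2:=3) erefl (hmg_nat _) hmg_gamma).
Qed.

Lemma zeta_hmg k : hmg k (z k). Proof. by case: (zeta_hmg3 k). Qed.

Definition gdiv (p : P) := {in msupp p, forall m : 'X_{1..2}, 0 < m ig}%N.

Lemma gdivD p q : gdiv p -> gdiv q -> gdiv (p + q).
Proof. by move=> hp hq m /msuppD_le; rewrite mem_cat => /orP [/hp|/hq]. Qed.
Lemma gdivN p : gdiv p -> gdiv (- p).
Proof. by move=> hp m; rewrite (perm_mem (msuppN p)); apply: hp. Qed.
Lemma gdivMl p q : gdiv p -> gdiv (p * q).
Proof.
move=> hp m /msuppM_le /allpairsP [[m1 m2] /= [h1 h2 ->]].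
by rewrite mnmDE (leq_trans (hp _ h1)) // leq_addr.
Qed.
Lemma gdivMr p q : gdiv q -> gdiv (p * q).
Proof. by move=> hq; rewrite mulrC; apply: gdivMl. Qed.
Lemma gdiv0 : gdiv 0. Proof. by move=> m; rewrite msupp0. Qed.
Lemma gdiv_gamma : gdiv (gamma R).
Proof. by move=> m; rewrite msuppX mem_seq1 => /eqP ->; rewrite Ugg. Qed.
Lemma gdiv_coef p (m : 'X_{1..2}) : gdiv p -> m ig = 0%N -> p@_m = 0.
Proof.
move=> hp hm; apply/eqP; rewrite mcoeff_eq0; apply/negP => /hp; by rewrite hm.
Qed.

Lemma zeta_gdiv k : gdiv (z k - alpha R ^+ k).
Proof.
have H3 : forall k, [/\ gdiv (z k - alpha R ^+ k), gdiv (z k.+1 - alpha R ^+ k.+1)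
   & gdiv (z k.+2 - alpha R ^+ k.+2)].
  elim=> [|n [h0 h1 h2]].
    by rewrite zeta0 zeta1 zeta2 expr1 expr0 !subrr; split; apply: gdiv0.
  split=> //.
  have -> : z n.+3 - alpha R ^+ n.+3 = alpha R * (z n.+2 - alpha R ^+ n.+2)
     + (2 * n.+2 * n.+1)%N%:R * gamma R * z n by rewrite zetaS exprS; ring.
  apply: gdivD; first by apply: gdivMr.
  by apply: gdivMl; apply: gdivMr; apply: gdiv_gamma.
by case: (H3 k).
Qed.

Lemma gamma_div q : gdiv q -> exists q1, q = gamma R * q1.
Proof.
move=> hq; exists (\sum_(m <- msupp q) q@_m *: 'X_[m - U_(ig)]).
rewrite {1}(mpolyE q) mulr_sumr big_seq [RHS]big_seq; apply: eq_bigr => m hm.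
rewrite -scalerAr /gamma -mpolyXD; congr (_ *: 'X_[_]).
move: (hq m hm) => h; mnm_tac.
Qed.

Lemma J_sub g p q : J' R g p -> J' R g q -> J' R g (p - q).
Proof. by move=> hp hq; apply: J_add => //; apply: J_opp. Qed.

Lemma gJ n p : J' R n p -> J' R n.+2 (gamma R * p).
Proof.
move=> /J'E [x [y [w ->]]].
have [c1 h1] := gz n; have [c2 h2] := gz n.+1.
have -> : gamma R * (x * z n + y * z n.+1 + w * z n.+2) =
  x * (gamma R * z n) + y * (gamma R * z n.+1) + (w * gamma R) * z n.+2 by ring.
rewrite h1 h2; apply: J_add; [apply: J_add|]; apply: J_mul.
- by apply: J_mul; apply: J_sub; [apply: J_g1 | apply: J_mul; apply: J_g0].
- by apply: J_mul; apply: J_sub; [apply: J_g2 | apply: J_mul; apply: J_g1].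
- exact: J_g0.
Qed.

Lemma J1_gamma : J' R 1 (gamma R).
Proof.
have [c h] := gz 0; rewrite zeta0 mulr1 in h; rewrite h.
by apply: J_mul; apply: J_sub; [apply: J_g2 | apply: J_mul; apply: J_g1].
Qed.

Lemma J0_all p : J' R 0 p.
Proof. by rewrite -[p]mulr1 -zeta0; apply: J_mul; apply: J_g0. Qed.

Lemma gpowJ g j p : J' R g p -> J' R (g + 2 * j) (gamma R ^+ j * p).
Proof.
move=> h; elim: j => [|j ih]; first by rewrite expr0 mul1r muln0 addn0.
rewrite exprS -mulrA (_ : (g + 2 * j.+1 = (g + 2 * j).+2)%N); last by lia.
exact: gJ.
Qed.

Lemma Dec g f : J' R g f -> (0 < g)%N ->
  exists Pp h, f = Pp * z g + gamma R * h /\ ((2 <= g)%N -> J' R (g - 2) h).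
Proof.
move=> /J'E [x [y [w ->]]]; case: g => [//|[|n]] _.
  exists (x + y * alpha R + w * alpha R ^+ 2), (w * (2 * 2 * 1)%N%:R); split=> //.
  by rewrite zetaS zeta2 zeta1 zeta0; ring.
exists (x + y * alpha R + w * alpha R ^+ 2),
  (y * (2 * n.+2 * n.+1)%N%:R * z n + w * (alpha R * (2 * n.+2 * n.+1)%N%:R * z n
     + (2 * n.+3 * n.+2)%N%:R * z n.+1)); split.
  by rewrite !zetaS; ring.
move=> _; rewrite subn2 /=; apply: J_add; apply: J_mul.
  exact: J_g0.
by apply: J_add; apply: J_mul; [apply: J_g0 | apply: J_g1].
Qed.

Lemma lexle_refl m : lexle m m.
Proof. by rewrite /lexle eqxx leqnn orbT. Qed.

Lemma lexle_total m1 m2 : lexle m1 m2 || lexle m2 m1.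
Proof.
rewrite /lexle; case: (ltngtP (m1 ia) (m2 ia)) => //= _.
by apply: leq_total.
Qed.

Lemma lexle_trans m2 m1 m3 : lexle m1 m2 -> lexle m2 m3 -> lexle m1 m3.
Proof.
rewrite /lexle => /orP [h1|/andP [/eqP e1 h1]] /orP [h2|/andP [/eqP e2 h2]].
- by rewrite (ltn_trans h1 h2).
- by rewrite -e2 h1.
- by rewrite e1 h2.
- by rewrite e1 e2 eqxx (leq_trans h1 h2) orbT.
Qed.

Lemma lexle_ia m1 m2 : lexle m1 m2 -> (m1 ia <= m2 ia)%N.
Proof. by rewrite /lexle => /orP [/ltnW|/andP [/eqP -> _]]. Qed.

Lemma lexleD u m1 m2 : lexle m1 m2 -> lexle (u + m1)%MM (u + m2)%MM.
Proof.
rewrite /lexle !mnmDE ltn_add2l eqn_add2l leq_add2l; done.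
Qed.

Lemma seq_max (s : seq 'X_{1..2}) : s != [::] ->
  exists2 m, m \in s & forall m', m' \in s -> lexle m' m.
Proof.
elim: s => [//|x s ih] _; case: (altP (s =P [::])) => [->|ne].
  exists x; first by rewrite mem_seq1.
  by move=> m'; rewrite mem_seq1 => /eqP ->; apply: lexle_refl.
have [m hm hmax] := ih ne.
case/orP: (lexle_total x m) => hx.
  exists m; first by rewrite in_cons hm orbT.
  by move=> m'; rewrite in_cons => /orP [/eqP ->|/hmax].
exists x; first by rewrite in_cons eqxx.
move=> m'; rewrite in_cons => /orP [/eqP ->|/hmax h]; first exact: lexle_refl.
exact: lexle_trans h hx.
Qed.

Lemma LM_exists (f : P) : f != 0 -> exists m, is_lexLM f m.
Proof.
rewrite -msupp_eq0 => /seq_max [m hm hmax]; by exists m.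
Qed.

Lemma LM_shift u (f : P) m : is_lexLM f m -> is_lexLM ('X_[u] * f) (u + m)%MM.
Proof.
case=> hm hmax; rewrite mulrC; split.
  by rewrite (perm_mem (msuppMX _ _)); apply: map_f.
move=> m'; rewrite (perm_mem (msuppMX _ _)) => /mapP [x hx ->].
by apply: lexleD; apply: hmax.
Qed.

Lemma LM_X u : is_lexLM ('X_[u] : P) u.
Proof.
split; first by rewrite msuppX mem_seq1.
by move=> m'; rewrite msuppX mem_seq1 => /eqP ->; apply: lexle_refl.
Qed.

Definition mA k := (U_(ia) *+ k)%MM.

Lemma alphaX k : alpha R ^+ k = 'X_[mA k].
Proof. by rewrite /alpha mpolyXn. Qed.

Lemma zeta_coefA k : (z k)@_(mA k) = 1.
Proof.
have -> : z k = alpha R ^+ k + (z k - alpha R ^+ k) by rewrite addrC subrK.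
rewrite mcoeffD (gdiv_coef _ _ (zeta_gdiv k)); last by rewrite /mA !mnmS.
by rewrite alphaX mcoeffX eqxx addr0.
Qed.

Lemma zeta_LM k : is_lexLM (z k) (mA k).
Proof.
split; first by rewrite mcoeff_msupp zeta_coefA oner_neq0.
move=> m' hm'; have := @zeta_hmg k m' hm'; 
 rewrite /wd /lexle /mA !mnmS => h.
case: (posnP (m' ig)) => hg.
  by rewrite hg muln0 addn0 in h; apply/orP; right; rewrite mul1n mul0n h hg eqxx.
apply/orP; left; lia.
Qed.

Arguments LM_exists {f}.
Arguments Dec {g f}.
Arguments gamma_div {q}.
Lemma gammaX : gamma R = 'X_[U_(ig)]. Proof. by []. Qed.

Lemma Gr g f : J' R g f -> f != 0 ->
  exists mf, is_lexLM f mf /\ (g <= mf ia + 2 * mf ig)%N.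
Proof.
elim/ltn_ind: g f => g IH f Jf nz.
case: (posnP g) => [->|gpos].
  by have [mf hmf] := LM_exists nz; exists mf.
have [Pp [h [ef Jh]]] := Dec Jf gpos.
case: (boolP (has (fun m : 'X_{1..2} => m ig == 0%N) (msupp Pp))).
  case/hasP => m hm /eqP hmg0.
  have [mf [hmf1 hmf2]] := LM_exists nz; exists mf; split => //.
  set M := (mA g + m)%MM.
  have hMg : M ig = 0%N by rewrite /M /mA !mnmS hmg0.
  have : f@_M = Pp@_m.
    have -> : f = Pp * 'X_[mA g] + (Pp * (z g - alpha R ^+ g) + gamma R * h).
      by rewrite ef -alphaX; ring.
    rewrite mcoeffD mcoeffMX mcoeffD.
    rewrite (gdiv_coef _ _ (gdivMr Pp _ (zeta_gdiv g)) hMg).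
    by rewrite (gdiv_coef _ _ (gdivMl _ h gdiv_gamma) hMg) !addr0.
  move=> eM; have : M \in msupp f by rewrite mcoeff_msupp eM -mcoeff_msupp.
  move=> /hmf2 /lexle_ia; rewrite /M /mA !mnmS; lia.
move=> hn; have gP : gdiv Pp.
  move=> m hm; rewrite lt0n; apply/negP => /eqP e.
  by move/hasP: hn; apply; exists m => //; rewrite e.
have [P1 eP] := gamma_div gP.
set f1 := P1 * z g + h.
have ef1 : f = gamma R * f1 by rewrite ef eP /f1; ring.
have nz1 : f1 != 0 by apply: contraNneq nz => e; rewrite ef1 e mulr0.
case: (ltnP g 2) => g2.
  have [mf1 hmf1] := LM_exists nz1.
  exists (U_(ig) + mf1)%MM; split; first by rewrite ef1 gammaX; apply: LM_shift.
  rewrite !mnmS; lia.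
have Jf1 : J' R (g - 2) f1.
  apply: J_add; last exact: Jh.
  apply: J_mul; move: (J_g2 (g - 2)).
  by have -> : (g - 2).+2 = g by lia.
have [|mf1 [hmf1 b1]] := IH (g - 2)%N _ f1 Jf1 nz1; first by lia.
exists (U_(ig) + mf1)%MM; split; first by rewrite ef1 gammaX; apply: LM_shift.
rewrite !mnmS; lia.
Qed.

Definition Sg g (m : 'X_{1..2}) := (m ia + 2 * m ig < g)%N.
Definition suppS g (s : P) := {in msupp s, forall m, Sg g m}.
Definition Spn g (p : P) := exists s, suppS g s /\ J' R g (p - s).

Lemma Spn_add g p q : Spn g p -> Spn g q -> Spn g (p + q).
Proof.
move=> [s1 [h1 j1]] [s2 [h2 j2]]; exists (s1 + s2); split.
  by move=> m /msuppD_le; rewrite mem_cat => /orP [/h1|/h2].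
have -> : p + q - (s1 + s2) = (p - s1) + (q - s2) by ring.
exact: J_add.
Qed.

Lemma Spn_scale g c p : Spn g p -> Spn g (c *: p).
Proof.
move=> [s1 [h1 j1]]; exists (c *: s1); split.
  by move=> m /msuppZ_le /h1.
by rewrite -!mul_mpolyC -mulrBr; apply: J_mul.
Qed.

Lemma Spn_J g u p : J' R g u -> Spn g p -> Spn g (u + p).
Proof.
move=> ju [s1 [h1 j1]]; exists s1; split => //.
by rewrite -addrA; apply: J_add.
Qed.

Lemma Spn_sum g (I : Type) (r : seq I) (F : I -> P) :
  (forall i, Spn g (F i)) -> Spn g (\sum_(i <- r) F i).
Proof.
move=> h; elim: r => [|i r ih].
  by rewrite big_nil; exists 0; split; [move=> m; rewrite msupp0 | rewrite subrr; apply: J_0].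
by rewrite big_cons; apply: Spn_add.
Qed.

Lemma SpStep g : (0 < g)%N -> (forall q, Spn g (gamma R * q)) -> forall p, Spn g p.
Proof.
move=> gpos hq.
have hgd : forall q, gdiv q -> Spn g q by move=> q /gamma_div [q1 ->].
have hX : forall m, Spn g 'X_[m].
  move=> m; case: (posnP (m ig)) => hm; last first.
    by apply: hgd => m'; rewrite msuppX mem_seq1 => /eqP ->.
  case: (ltnP (m ia) g) => ha.
    exists 'X_[m]; split; last by rewrite subrr; apply: J_0.
    by move=> m'; rewrite msuppX mem_seq1 => /eqP ->; rewrite /Sg hm muln0 addn0.
  have -> : 'X_[m] = 'X_[m - mA g] * z g + - ('X_[m - mA g] * (z g - alpha R ^+ g)).
    have -> : 'X_[m] = 'X_[m - mA g] * alpha R ^+ g.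
      rewrite alphaX -mpolyXD; congr 'X_[_]; rewrite /mA; mnm_tac.
    ring.
  apply: Spn_J; first by apply: J_mul; apply: J_g0.
  by apply: hgd; apply: gdivN; apply: gdivMr; apply: zeta_gdiv.
move=> p; rewrite (mpolyE p); apply: Spn_sum => m; apply: Spn_scale; apply: hX.
Qed.

Lemma Sp g p : Spn g p.
Proof.
elim/ltn_ind: g p => g IH.
case: (posnP g) => [->|gpos] p.
  by exists 0; split; [move=> m; rewrite msupp0 | apply: J0_all].
apply: SpStep => // q.
case: (ltnP g 2) => g2.
  exists 0; split; first by move=> m; rewrite msupp0.
  have -> : g = 1%N by lia.
  by rewrite subr0 mulrC; apply: J_mul; apply: J1_gamma.
have [|s1 [h1 j1]] := IH (g - 2)%N _ q; first by lia.
exists (gamma R * s1); split.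
  move=> m; rewrite gammaX mulrC (perm_mem (msuppMX _ _)) => /mapP [x hx ->].
  by move: (h1 x hx); rewrite /Sg !mnmS; lia.
rewrite -mulrBr; move: (gJ _ _ j1); by have -> : (g - 2).+2 = g by lia.
Qed.

Lemma GinJ g q : q \in groebner_set R g -> J' R g q.
Proof.
rewrite /groebner_set mem_cat => /orP [/mapP [j hj ->]|].
  rewrite mem_iota add0n ltnS in hj.
  have e : g = (g - 2 * j + 2 * j)%N.
    have := odd_double_half g; rewrite -muln2; move: hj; lia.
  by move: (gpowJ _ j _ (J_g0 (g - 2 * j))); rewrite -e.
rewrite mem_seq1 => /eqP ->; rewrite uphalf_half.
have := odd_double_half g; rewrite -muln2.
case: (odd g) => /= e.
  rewrite -{1}e exprSr addnC mulnC.
  by move: (gpowJ _ (g./2) _ J1_gamma); rewrite addnC.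
rewrite -{1}e add0n -[_ ^+ _]mulr1 mulnC.
by move: (gpowJ _ (g./2) _ (J0_all 1)); rewrite add0n.
Qed.

Lemma bexpE g a c : basis_exp g a c = (a + 2 * c < g)%N.
Proof.
rewrite /basis_exp; have e := odd_double_half g.
case: (odd g) e => /= e.
  have -> : (g.-1)./2 = g./2 by rewrite -{1}e /= doubleK.
  rewrite -muln2 in e.
  by apply/idP/idP; [move=> /andP [_ h]; lia | move=> h; apply/andP; split; lia].
rewrite -muln2 in e.
by apply/idP/idP; [move=> /andP [_ h]; lia | move=> h; apply/andP; split; lia].
Qed.

Definition mk a c := (U_(ia) *+ a + U_(ig) *+ c)%MM.
Lemma mkA a c : mk a c ia = a. Proof. rewrite /mk !mnmS; lia. Qed.
Lemma mkG a c : mk a c ig = c. Proof. rewrite /mk !mnmS; lia. Qed.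
Lemma mk_eta (m : 'X_{1..2}) : mk (m ia) (m ig) = m. Proof. by apply: mnm2P; rewrite ?mkA ?mkG. Qed.
Lemma mono_mk a c : mono R a c = 'X_[mk a c].
Proof. by rewrite /mono /alpha /gamma !mpolyXn -mpolyXD. Qed.

Lemma sum_coef g (coef : 'I_g.+1 * 'I_g.+1 -> CC R) (m : 'X_{1..2}) :
  (\sum_(ac : 'I_g.+1 * 'I_g.+1 | basis_exp g ac.1 ac.2) coef ac *: mono R ac.1 ac.2)@_m
   = if Sg g m then coef (inord (m ia), inord (m ig)) else 0.
Proof.
rewrite raddf_sum /=.
under eq_bigr => ac _ do rewrite mono_mk mcoeffZ mcoeffX.
case: ifP => hS.
  have ha : (m ia < g.+1)%N by move: hS; rewrite /Sg; lia.
  have hc : (m ig < g.+1)%N by move: hS; rewrite /Sg; lia.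
  rewrite (bigD1 (inord (m ia), inord (m ig))) /=; last first.
    by rewrite bexpE !inordK //; move: hS; rewrite /Sg.
  rewrite !inordK // mk_eta eqxx mulr1 big1 ?addr0 // => ac /andP [_ hne].
  case: eqP => [e|]; last by rewrite mulr0.
  move/negP: hne; case; apply/eqP; case: ac e => [a c] /= e.
  by congr pair; apply: val_inj; rewrite /= inordK // -e ?mkA ?mkG.
rewrite big1 // => ac hb; case: eqP => [e|]; last by rewrite mulr0.
by move: hS; rewrite -e /Sg mkA mkG -bexpE hb.
Qed.

End S.

Theorem proposition5p15 (R : realType) (g : nat) :
  is_groebner_lex (groebner_set R g) (J' R g) /\
  quotient_basis (J' R g) g (basis_exp g).
Proof.
split.
  split; first by move=> q; apply: GinJ.
  move=> f Jf nz; have [mf [hmf b]] := Gr _ _ _ Jf nz.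
  case: (leqP (mf ig) g./2) => hc.
    exists (gamma R ^+ (mf ig) * zeta' R (g - 2 * mf ig)); split.
      rewrite mem_cat; apply/orP; left; apply/mapP; exists (mf ig) => //.
      by rewrite mem_iota add0n ltnS.
    exists mf, (U_(ig) *+ (mf ig) + mA (g - 2 * mf ig))%MM; split => //.
      by rewrite /gamma mpolyXn; apply: LM_shift; apply: zeta_LM.
    apply/mnm_lepP => i; case: (I2 i) => ->; rewrite /mA !mnmS; lia.
  exists (gamma R ^+ uphalf g); split.
    by rewrite mem_cat mem_seq1 eqxx orbT.
  exists mf, (U_(ig) *+ uphalf g)%MM; split => //.
    by rewrite /gamma mpolyXn; apply: LM_X.
  apply/mnm_lepP => i; case: (I2 i) => ->; rewrite !mnmS; first by lia.
  rewrite uphalf_half; case: (odd g) => /=; lia.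
split.
  move=> p; have [s [hs js]] := Sp R g p.
  exists (fun ac : 'I_g.+1 * 'I_g.+1 => s@_(mk ac.1 ac.2)).
  suff -> : (\sum_(ac : 'I_g.+1 * 'I_g.+1 | basis_exp g ac.1 ac.2)
     s@_(mk ac.1 ac.2) *: mono R ac.1 ac.2) = s by [].
  apply/mpolyP => m; rewrite sum_coef; case: ifP => hS.
    have ha : (m ia < g.+1)%N by move: hS; rewrite /Sg; lia.
    have hc : (m ig < g.+1)%N by move: hS; rewrite /Sg; lia.
    by rewrite /= !inordK // mk_eta.
  by apply/esym/eqP; rewrite mcoeff_eq0; apply/negP => /hs; rewrite hS.
move=> coef Jc ac hb.
set F := \sum_(_ | _) _ in Jc.
have F0 : F = 0.
  apply/eqP; apply: contraT => nz; have [mf [[hmf _] b]] := Gr _ _ _ Jc nz.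
  move: hmf; rewrite mcoeff_msupp /F sum_coef; case: ifP => hS; last by rewrite eqxx.
  by move: hS b; rewrite /Sg => ? ?; lia.
have hF : F@_(mk ac.1 ac.2) = 0 by rewrite F0 mcoeff0.
rewrite /F sum_coef /Sg mkA mkG -bexpE hb !inord_val in hF.
by case: ac hb hF.
Qed.
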